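(* Let $\mathcal{X}=\{1,\ldots,n\}$, let $p=(p(1),\ldots,p(n))$ be a probability vector with $p(1)\geq\cdots\geq p(n)>0$ (the prior of $X$), and let $k<n$ be a positive integer. Let $j^*:=\min\{j:1\leq j\leq k,\ p(j)\leq \sum_{i=j}^n p(i)/(k-j+1)\}$ and let $\pi=(\pi_1,\ldots,\pi_k)$ with $\pi_l=p(l)$ for $l\leq j^*-1$ and $\pi_l=\sum_{i=j^*}^n p(i)/(k-j^*+1)$ for $j^*\leq l\leq k$. Then for every generalised entropy $(\eta,F)$ and every feasible channel, $H(X\mid Y)\leq H(\pi)=\eta(F(\pi))$.
   Context: Generalised entropy: a pair $(\eta,F)$ where $F$ is a bounded real-valued function on probability vectors of every finite length that is symmetric (unchanged by permuting entries) and expansible (unchanged by appending zero entries), and $\eta$ is a real function, such that either $\eta$ is increasing and $F$ concave, or $\eta$ is decreasing and $F$ convex. $H(X\mid Y)=\eta\big(\sum_{y:\,p(y)>0}p(y)F(p_{X\mid y})\big)$ with $p_{X\mid y}=(p(x\mid y))_{x\in\mathcal{X}}$. A channel is a discrete output set $\mathcal{Y}$ with conditional probabilities $p(y\mid x)\geq0$, $\sum_y p(y\mid x)=1$; $Y$ is its output when the input is $X\sim p$, with $p(y)=\sum_x p(x)p(y\mid x)$ and $p(x\mid y)=p(x)p(y\mid x)/p(y)$. The pre-image of $y$ is $\{x:p(y\mid x)>0\}$; the channel is feasible if every pre-image has at most $k$ elements. *)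

(* Defs.v *)
From HB Require Import structures.
From mathcomp Require Import all_boot all_order all_algebra.
From mathcomp Require Import all_classical all_reals all_analysis.
Set Implicit Arguments. Unset Strict Implicit. Unset Printing Implicit Defensive.
Import Order.TTheory GRing.Theory Num.Theory.
Import numFieldNormedType.Exports.
Local Open Scope classical_set_scope.
Local Open Scope ring_scope.

Section GenEnt.
Variable R : realType.

Definition prob_vec (s : seq R) : Prop :=
  (forall x, x \in s -> 0 <= x) /\ \sum_(x <- s) x = 1.

Definition F_bounded (F : seq R -> R) : Prop :=
  exists M : R, forall s, prob_vec s -> `|F s| <= M.

Definition F_symmetric (F : seq R -> R) : Prop :=
  forall s t, prob_vec s -> perm_eq s t -> F s = F t.

Definition F_expansible (F : seq R -> R) : Prop :=
  forall s m, prob_vec s -> F (s ++ nseq m 0) = F s.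

Definition mix (lam : R) (s t : seq R) : seq R :=
  [seq lam * a.1 + (1 - lam) * a.2 | a <- zip s t].

Definition F_concave (F : seq R -> R) : Prop :=
  forall s t (lam : R), prob_vec s -> prob_vec t -> size s = size t ->
    0 <= lam <= 1 -> lam * F s + (1 - lam) * F t <= F (mix lam s t).

Definition F_convex (F : seq R -> R) : Prop :=
  forall s t (lam : R), prob_vec s -> prob_vec t -> size s = size t ->
    0 <= lam <= 1 -> F (mix lam s t) <= lam * F s + (1 - lam) * F t.

Definition eta_increasing (eta : R -> R) : Prop := forall x y, x <= y -> eta x <= eta y.
Definition eta_decreasing (eta : R -> R) : Prop := forall x y, x <= y -> eta y <= eta x.

Definition gen_entropy (eta : R -> R) (F : seq R -> R) : Prop :=
  [/\ F_bounded F, F_symmetric F, F_expansible F &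
      (eta_increasing eta /\ F_concave F) \/ (eta_decreasing eta /\ F_convex F)].

(* Channels with input set {0,..,n-1} and (countable) output set nat:
   W x y = p(y | x). *)
Definition is_channel (n : nat) (W : nat -> nat -> R) : Prop :=
  (forall x y, (x < n)%N -> 0 <= W x y) /\
  (forall x, (x < n)%N -> (fun m => \sum_(0 <= y < m) W x y) @ \oo --> (1 : R)).

Definition feasible (n k : nat) (W : nat -> nat -> R) : Prop :=
  forall y, leq (count (fun x => 0 < W x y) (iota 0 n)) k.

(* output distribution p(y) for prior p (x = 0 .. size p - 1) *)
Definition out_prob (p : seq R) (W : nat -> nat -> R) (y : nat) : R :=
  \sum_(0 <= x < size p) p`_x * W x y.

Definition post (p : seq R) (W : nat -> nat -> R) (y : nat) : seq R :=
  [seq p`_x * W x y / out_prob p W y | x <- iota 0 (size p)].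

Definition cond_entropy (eta : R -> R) (F : seq R -> R) (p : seq R)
    (W : nat -> nat -> R) : R :=
  eta (limn (fun m => \sum_(0 <= y < m)
         (if 0 < out_prob p W y then out_prob p W y * F (post p W y) else 0))).

(* j* (0-based: paper's j* minus 1) *)
Definition jstar (p : seq R) (k : nat) : nat :=
  find (fun j => p`_j <= (\sum_(j <= i < size p) p`_i) / (k - j)%:R) (iota 0 k).

Definition pi_vec (p : seq R) (k : nat) : seq R :=
  let j := jstar p k in
  [seq (if (l < j)%N then p`_l else (\sum_(j <= i < size p) p`_i) / (k - j)%:R)
  | l <- iota 0 k].

End GenEnt.

(* Main.v *)
Require Import Defs.
From HB Require Import structures.
From mathcomp Require Import all_boot all_order all_algebra.
From mathcomp Require Import all_classical all_reals all_analysis.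
From mathcomp Require Import ring lra zify.
Import Order.TTheory GRing.Theory Num.Theory.
Import numFieldNormedType.Exports.
Local Open Scope classical_set_scope.
Local Open Scope ring_scope.
Set Implicit Arguments. Unset Strict Implicit.

Lemma sum_mkseq (R : realType) (f : nat -> R) m :
  \sum_(x <- mkseq f m) x = \sum_(0 <= i < m) f i.
Proof. by rewrite /mkseq big_map /index_iota subn0. Qed.

Lemma mem_mkseqP (T : eqType) (f : nat -> T) m x :
  x \in mkseq f m -> exists2 i, (i < m)%N & x = f i.
Proof. by move=> /mapP [i]; rewrite mem_iota add0n => /andP [_ hi] ->; exists i. Qed.

Lemma prob_mk (R : realType) (f : nat -> R) m :
  (forall i, (i < m)%N -> 0 <= f i) -> \sum_(0 <= i < m) f i = 1 ->
  prob_vec (mkseq f m).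
Proof.
move=> h1 h2; split; last by rewrite sum_mkseq.
by move=> x /mem_mkseqP [i hi ->]; apply: h1.
Qed.

Lemma prob_mkE (R : realType) (f : nat -> R) m :
  prob_vec (mkseq f m) ->
  (forall i, (i < m)%N -> 0 <= f i) /\ \sum_(0 <= i < m) f i = 1.
Proof.
move=> [h1 h2]; split; last by rewrite -sum_mkseq.
move=> i hi; apply: h1; apply/mapP; exists i => //; rewrite mem_iota /=; lia.
Qed.

Lemma prob_perm (R : realType) (s t : seq R) : prob_vec s -> perm_eq s t -> prob_vec t.
Proof.
move=> [h1 h2] hp; split; last by rewrite -(perm_big _ hp).
by move=> x; rewrite -(perm_mem hp); apply: h1.
Qed.

Lemma mix_mk (R : realType) lam (f g : nat -> R) m :
  mix lam (mkseq f m) (mkseq g m) = mkseq (fun i => lam * f i + (1 - lam) * g i) m.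
Proof. rewrite /mix /mkseq; elim: (iota 0 m) => //= a s ->; done. Qed.

Definition sw {T : Type} (a b : nat) (f : nat -> T) : nat -> T :=
  fun x => if x == a then f b else if x == b then f a else f x.

Lemma perm_sw (T : eqType) (a b : nat) (f : nat -> T) m :
  (a < m)%N -> (b < m)%N -> perm_eq (mkseq (sw a b f) m) (mkseq f m).
Proof.
move=> ha hb.
pose s := fun x : nat => if x == a then b else if x == b then a else x.
have ss : cancel s s.
  move=> x; rewrite /s; case: (eqVneq x a) => [->|xa].
    by rewrite eqxx; case: eqVneq => // ->.
  case: (eqVneq x b) => [->|xb]; first by rewrite eqxx.
  by rewrite (negPf xa) (negPf xb).
have -> : mkseq (sw a b f) m = map f (map s (iota 0 m)).
  rewrite -map_comp; apply: eq_map => x /=; rewrite /sw /s.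
  by case: ifP => //; case: ifP.
apply: perm_map; apply: uniq_perm.
- by rewrite (map_inj_uniq (can_inj ss)) iota_uniq.
- exact: iota_uniq.
move=> x; rewrite -{1}(ss x) (mem_map (can_inj ss)) !mem_iota /= /s.
case: ifP => [/eqP ->|_]; first by rewrite ha hb.
by case: ifP => [/eqP ->|//]; rewrite ha hb.
Qed.

Lemma count_le_in (T : eqType) (P Q : pred T) s :
  {in s, subpred Q P} -> (count Q s <= count P s)%N.
Proof.
elim: s => //= y s IH hs.
have := IH (fun x xs => hs x (@mem_behead _ (y :: s) x xs)).
have := hs y (mem_head _ _); by case: (Q y); case: (P y) => //= h; try lia; have := h erefl.
Qed.

Lemma count_lt (T : eqType) (P Q : pred T) s z :
  {in s, subpred Q P} -> z \in s -> P z -> ~~ Q z -> (count Q s < count P s)%N.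
Proof.
elim: s => //= y s IH hs; rewrite inE => /orP [/eqP <- | zs] hP hQ.
  rewrite hP (negPf hQ) /= add0n ltnS; apply: count_le_in => x xs.
  by apply: hs; rewrite inE xs orbT.
have := IH (fun x xs => hs x (@mem_behead _ (y :: s) x xs)) zs hP hQ.
have := hs y (mem_head _ _); by case: (Q y); case: (P y) => //= h; try lia; have := h erefl.
Qed.

Lemma prob_mix_mk (R : realType) lam (f g : nat -> R) m :
  prob_vec (mkseq f m) -> prob_vec (mkseq g m) -> 0 <= lam <= 1 ->
  prob_vec (mkseq (fun i => lam * f i + (1 - lam) * g i) m).
Proof.
move=> /prob_mkE [f0 f1] /prob_mkE [g0 g1] /andP [l0 l1]; apply: prob_mk.
  move=> i hi; have := f0 i hi; have := g0 i hi; nra.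
by rewrite big_split /= -!mulr_sumr f1 g1; ring.
Qed.

Lemma ttrans (R : realType) (G : seq R -> R) m (f : nat -> R) a b lam :
  F_concave G -> F_symmetric G -> prob_vec (mkseq f m) ->
  (a < m)%N -> (b < m)%N -> 0 <= lam <= 1 ->
  G (mkseq f m) <= G (mkseq (fun i => lam * f i + (1 - lam) * sw a b f i) m).
Proof.
move=> hc hs hp ha hb hl.
have hpe : perm_eq (mkseq f m) (mkseq (sw a b f) m) by rewrite perm_sym; apply: perm_sw.
have hp' := prob_perm hp hpe.
have e := hs _ _ hp hpe.
rewrite -mix_mk; apply: le_trans (hc _ _ _ hp hp' _ hl); last by rewrite !size_mkseq.
by rewrite -e; lra.
Qed.

Lemma sum_le_eq (R : realType) (f g : nat -> R) m :
  (forall i, (i < m)%N -> f i <= g i) ->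
  \sum_(0 <= i < m) f i = \sum_(0 <= i < m) g i -> forall i, (i < m)%N -> f i = g i.
Proof.
move=> hle hs i hi.
have h0 : \sum_(i < m | true) (g i - f i) = 0.
  by rewrite -(big_mkord xpredT (fun i => g i - f i)) sumrB hs subrr.
have hnn : forall j : 'I_m, xpredT j -> 0 <= g j - f j.
  by move=> j _; rewrite subr_ge0; apply: hle.
have := @psumr_eq0P _ _ xpredT (fun i : 'I_m => g i - f i) hnn h0 (Ordinal hi) erefl.
by move=> /= H; apply/eqP; rewrite eq_sym -subr_eq0 H.
Qed.

Lemma FL (R : realType) (G : seq R -> R) m (x t : nat -> R) (D : pred nat) :
  F_concave G -> F_symmetric G -> prob_vec (mkseq x m) -> prob_vec (mkseq t m) ->
  (forall b, (b < m)%N -> ~~ D b -> t b <= x b) ->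
  (forall a b, (a < m)%N -> (b < m)%N -> D b -> t b <= t a) ->
  G (mkseq x m) <= G (mkseq t m).
Proof.
move=> hc hs hx ht hnd hD.
have eqcase : forall x, ~~ has (fun i => x i != t i) (iota 0 m) ->
    G (mkseq x m) <= G (mkseq t m).
  move=> y /hasPn H; suff -> : mkseq y m = mkseq t m by [].
  by apply/eq_in_map => i /H /negbNE /eqP.
have [c hc0] : exists c, (count (fun i => x i != t i) (iota 0 m) <= c)%N.
  by exists (count (fun i => x i != t i) (iota 0 m)).
elim: c x hx hnd hc0 => [|c IH] x hx hnd hcnt.
  by apply: eqcase; rewrite has_count -leqNgt.
case: (boolP (has (fun i => x i != t i) (iota 0 m))) => [hh|hh]; last exact: eqcase.
have [xt0 xt1] := prob_mkE hx; have [tt0 tt1] := prob_mkE ht.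
have [i0 hi0 hne] : exists2 i0, (i0 < m)%N & x i0 != t i0.
  by move: hh => /hasP [i0]; rewrite mem_iota /= => hi0 ?; exists i0.
have getex : forall (u v : nat -> R), \sum_(0 <= i < m) u i = \sum_(0 <= i < m) v i ->
    u i0 != v i0 -> exists2 a, (a < m)%N & v a < u a.
  move=> u v huv hne'; case: (boolP (has (fun a => v a < u a) (iota 0 m))).
    by move=> /hasP [a]; rewrite mem_iota /= => ha hlt; exists a.
  move=> /hasPn H; exfalso.
  have hle : forall i, (i < m)%N -> u i <= v i.
    by move=> i hi; have := H i; rewrite mem_iota /= hi => /(_ erefl); rewrite -leNgt.
  by have := sum_le_eq hle huv hi0; move/eqP; rewrite (negPf hne').
have [a ha hxa] := getex x t (etrans xt1 (esym tt1)) hne.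
have hne2 : t i0 != x i0 by rewrite eq_sym.
have [b hb hxb] := getex t x (etrans tt1 (esym xt1)) hne2.
have hDb : D b by case E: (D b) => //; have := hnd b hb (negbT E); lra.
have htab := hD a b ha hb hDb.
have hab : a != b by apply/eqP => eab; move: hxa hxb; rewrite eab; lra.
pose d := Num.min (x a - t a) (t b - x b).
have d1 : d <= x a - t a by rewrite /d ge_min lexx.
have d2 : d <= t b - x b by rewrite /d ge_min lexx orbT.
have d0 : 0 < d by rewrite /d lt_min !subr_gt0 hxa hxb.
have xab : 0 < x a - x b by lra.
pose lam := 1 - d / (x a - x b).
have hlam : 0 <= lam <= 1.
  rewrite /lam; apply/andP; split.
    by rewrite subr_ge0 ler_pdivrMr // mul1r; lra.
  by rewrite lerBlDr lerDl divr_ge0 //; lra.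
pose x' := fun i => lam * x i + (1 - lam) * sw a b x i.
have x'a : x' a = x a - d.
  rewrite /x' /sw eqxx /lam; field; lra.
have x'b : x' b = x b + d.
  rewrite /x' /sw eq_sym (negPf hab) eqxx /lam; field; lra.
have x'o : forall i, i != a -> i != b -> x' i = x i.
  by move=> i ia ib; rewrite /x' /sw (negPf ia) (negPf ib); ring.
apply: (le_trans (@ttrans R G m x a b lam hc hs hx ha hb hlam)).
apply: (IH x').
- by apply: prob_mix_mk => //; apply: prob_perm hx _; rewrite perm_sym; apply: perm_sw.
- move=> i hi nDi; case: (eqVneq i a) => [->|ia]; first by rewrite x'a; lra.
  case: (eqVneq i b) => [eib|ib]; first by move: nDi; rewrite eib hDb.
  by rewrite x'o //; apply: hnd.
have sub : forall i, x' i != t i -> x i != t i.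
  move=> i hi; case: (eqVneq i a) => [->|ia]; first by apply/eqP; lra.
  case: (eqVneq i b) => [->|ib]; first by apply/eqP; lra.
  by move: hi; rewrite x'o.
have [z [hz1 hz2 hz3]] : exists z, [/\ (z < m)%N, x z != t z & x' z == t z].
  case: (lerP (x a - t a) (t b - x b)) => hcmp.
    exists a; split => //; first by apply/eqP; lra.
    by rewrite x'a /d; apply/eqP; rewrite (min_idPl hcmp); ring.
  exists b; split => //; first by apply/eqP; lra.
  rewrite x'b /d; apply/eqP; rewrite (min_idPr (ltW hcmp)); ring.
have := @count_lt _ (fun i => x i != t i) (fun i => x' i != t i) (iota 0 m) z
  (fun i _ => sub i) _ hz2 _.
rewrite mem_iota /= hz1 hz3 /= => /(_ erefl erefl) H.
by rewrite -ltnS (leq_trans H hcnt).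
Qed.

Lemma jensen (R : realType) (G : seq R -> R) m N (w : nat -> R) (u : nat -> nat -> R) :
  F_concave G ->
  (forall y, (y < N)%N -> 0 <= w y) -> \sum_(0 <= y < N) w y = 1 ->
  (forall y, (y < N)%N -> prob_vec (mkseq (u y) m)) ->
  prob_vec (mkseq (fun i => \sum_(0 <= y < N) w y * u y i) m) /\
  \sum_(0 <= y < N) w y * G (mkseq (u y) m) <=
    G (mkseq (fun i => \sum_(0 <= y < N) w y * u y i) m).
Proof.
move=> hc; elim: N w u => [|N IH] w u hw0 hw1 hu.
  by move: hw1; rewrite big_geq // => /eqP; rewrite eq_sym oner_eq0.
move: hw1; rewrite big_nat_recl // => hw1.
have hr0 : forall y, (y < N)%N -> 0 <= w y.+1 by move=> y hy; apply: hw0.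
have hsr0 : 0 <= \sum_(0 <= y < N) w y.+1.
  by rewrite big_seq_cond; apply: sumr_ge0 => y /andP []; rewrite mem_index_iota => /andP [_ /hr0].
have e1 : forall (X : nat -> R), \sum_(0 <= y < N.+1) w y * X y = w 0%N * X 0%N + \sum_(0 <= y < N) w y.+1 * X y.+1.
  by move=> X; rewrite big_nat_recl.
set lam := w 0%N in hw1 e1 *.
have hl0 : 0 <= lam by apply: hw0.
have hu0 := hu 0%N erefl.
case: (eqVneq lam 1) => [hl1|hl1].
  have hz : forall y, (y < N)%N -> w y.+1 = 0.
    move=> y hy; symmetry; apply: (@sum_le_eq R (fun _ => 0) (fun y => w y.+1) N) => //.
    by rewrite big1 //; move: hw1; rewrite hl1; lra.
  have hz2 : forall X : nat -> R, \sum_(0 <= y < N) w y.+1 * X y.+1 = 0.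
    move=> X; rewrite big_seq_cond big1 // => y /andP []; rewrite mem_index_iota => /andP [_ hy] _.
    by rewrite hz // mul0r.
  have em : mkseq (fun i => \sum_(0 <= y < N.+1) w y * u y i) m = mkseq (u 0%N) m.
    by apply: eq_mkseq => i; rewrite e1 (hz2 (fun y => u y i)) hl1 addr0 mul1r.
  by rewrite em e1 (hz2 (fun y => G (mkseq (u y) m))) hl1 addr0 mul1r.
have hl1' : lam < 1 by rewrite lt_neqAle hl1 /=; lra.
pose w' := fun y => w y.+1 / (1 - lam).
have hl1n : 1 - lam != 0 by apply/eqP; lra.
have hw'0 : forall y, (y < N)%N -> 0 <= w' y.
  by move=> y hy; rewrite /w' divr_ge0 // ?hr0 //; lra.
have hw'1 : \sum_(0 <= y < N) w' y = 1.
  rewrite /w' -mulr_suml; have -> : \sum_(0 <= y < N) w y.+1 = 1 - lam by lra.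
  by rewrite divff.
have hu' : forall y, (y < N)%N -> prob_vec (mkseq (u y.+1) m) by move=> y hy; apply: hu.
have [IH1 IH2] := IH w' (fun y => u y.+1) hw'0 hw'1 hu'.
have key : forall X : nat -> R, \sum_(0 <= y < N) w y.+1 * X y.+1 =
    (1 - lam) * \sum_(0 <= y < N) w' y * X y.+1.
  by move=> X; rewrite mulr_sumr; apply: eq_bigr => y _; rewrite /w'; field.
have emix : mkseq (fun i => \sum_(0 <= y < N.+1) w y * u y i) m =
    mkseq (fun i => lam * u 0%N i + (1 - lam) * \sum_(0 <= y < N) w' y * u y.+1 i) m.
  by apply: eq_mkseq => i; rewrite e1 (key (fun y => u y i)).
have hl : 0 <= lam <= 1 by apply/andP; split; lra.
rewrite emix; split; first exact: prob_mix_mk.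
rewrite e1 (key (fun y => G (mkseq (u y) m))).
have := hc _ _ _ hu0 IH1 _ hl; rewrite mix_mk !size_mkseq => /(_ erefl) H.
apply: le_trans H; rewrite lerD2l; apply: ler_wpM2l; first lra.
exact: IH2.
Qed.

Lemma map_const0 (R : realType) (s : seq nat) : map (fun _ => (0 : R)) s = nseq (size s) 0.
Proof. by elim: s => //= a s ->. Qed.

Lemma count_mk (R : realType) (v : nat -> R) n :
  count (fun i => (0 < v i)%R) (iota 0 n) = count (fun x : R => (0 < x)%R) (mkseq v n).
Proof. by rewrite /mkseq count_map. Qed.

Lemma place (R : realType) n k (v : nat -> R) :
  (k <= n)%N -> (forall i, (i < n)%N -> 0 <= v i) ->
  (count (fun i => (0 < v i)%R) (iota 0 n) <= k)%N ->
  exists u : nat -> R, perm_eq (mkseq u k ++ nseq (n - k) 0) (mkseq v n) /\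
    (forall i, (i < k)%N -> v i <= u i).
Proof.
move=> hkn.
have [c hc0] : exists c, (count (fun i => (0 < v i)%R) (iota k (n - k)) <= c)%N.
  by exists (count (fun i => (0 < v i)%R) (iota k (n - k))).
have iotaE : iota 0 n = iota 0 k ++ iota k (n - k) by rewrite -{1}(subnKC hkn) iotaD.
elim: c v hc0 => [|c IH] v hc hv0 hcnt.
  exists v; split => //.
  rewrite /mkseq iotaE map_cat; suff -> : map v (iota k (n - k)) = nseq (n - k) 0 by [].
  rewrite (_ : nseq (n - k) 0 = map (fun _ => (0 : R)) (iota k (n - k))); last by rewrite map_const0 size_iota.
  apply/eq_in_map => i hi.
  have /hasPn H : ~~ has (fun i => (0 < v i)%R) (iota k (n - k)) by rewrite has_count -leqNgt.
  have := H i hi; move: hi; rewrite mem_iota => /andP [_ hi].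
  have := hv0 i ltac:(lia); rewrite le_eqVlt => /orP [/eqP <- //|->] //.
case: (leqP (count (fun i => (0 < v i)%R) (iota k (n - k))) c) => hcc.
  exact: IH.
have [b hb hvb] : exists2 b, b \in iota k (n - k) & 0 < v b.
  by apply/hasP; rewrite has_count; exact: leq_ltn_trans (leq0n c) hcc.
have [a ha hva] : exists2 a, a \in iota 0 k & ~~ (0 < v a).
  apply/hasP; apply/negPn/negP => /hasPn H.
  have hall : all (fun a => (0 < v a)%R) (iota 0 k) by apply/allP => x hx; have := H x hx; rewrite negbK.
  move: hcnt; rewrite iotaE count_cat; move: hall; rewrite all_count => /eqP ->; rewrite size_iota.
  lia.
move: ha hb; rewrite !mem_iota /= => ha /andP [hb1 hb2].
have hb : (b < n)%N by lia.
have han : (a < n)%N by lia.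
have hva0 : v a = 0 by have := hv0 a han; rewrite le_eqVlt (negPf hva) orbF => /eqP <-.
have hab : a != b by apply/eqP => e; move: ha hb1; rewrite e; lia.
pose v' := sw a b v.
have v'a : v' a = v b by rewrite /v' /sw eqxx.
have v'b : v' b = v a by rewrite /v' /sw eq_sym (negPf hab) eqxx.
have v'o : forall i, i != a -> i != b -> v' i = v i.
  by move=> i ia ib; rewrite /v' /sw (negPf ia) (negPf ib).
have hperm : perm_eq (mkseq v' n) (mkseq v n) by apply: perm_sw.
have hv0' : forall i, (i < n)%N -> 0 <= v' i.
  move=> i hi; case: (eqVneq i a) => [->|ia]; first by rewrite v'a; apply: hv0.
  case: (eqVneq i b) => [->|ib]; first by rewrite v'b; apply: hv0.
  by rewrite v'o //; apply: hv0.
have hcnt' : (count (fun i => (0 < v' i)%R) (iota 0 n) <= k)%N.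
  by rewrite count_mk (permP hperm) -count_mk.
have hc' : (count (fun i => (0 < v' i)%R) (iota k (n - k)) <= c)%N.
  have := @count_lt _ (fun i => (0 < v i)%R) (fun i => (0 < v' i)%R) (iota k (n - k)) b.
  rewrite mem_iota hb1 /= v'b hva0 ltxx /= hvb.
  have H : {in iota k (n - k), subpred (fun i => (0 < v' i)%R) (fun i => (0 < v i)%R)}.
    move=> i; rewrite mem_iota => /andP [hi1 _] /=.
    have ia : i != a by apply/eqP => e; move: ha hi1; rewrite e; lia.
    case: (eqVneq i b) => [->|ib]; first by rewrite v'b hva0 ltxx.
    by rewrite v'o.
  move=> /(_ H); rewrite subnKC; last by lia.
  move=> /(_ hb erefl erefl) hlt; lia.
have [u [hu1 hu2]] := IH v' hc' hv0' hcnt'.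
exists u; split; first exact: perm_trans hu1 hperm.
move=> i hi; apply: le_trans (hu2 i hi).
case: (eqVneq i a) => [->|ia]; first by rewrite v'a hva0 ltW.
have ib : i != b by apply/eqP => e; move: hi hb1; rewrite e; lia.
by rewrite v'o.
Qed.

Definition cval (R : realType) (p : seq R) (k : nat) : R :=
  (\sum_(jstar p k <= i < size p) p`_i) / (k - jstar p k)%:R.

Definition pif (R : realType) (p : seq R) (k : nat) (l : nat) : R :=
  if (l < jstar p k)%N then p`_l else cval p k.

Lemma pi_vecE (R : realType) (p : seq R) k : pi_vec p k = mkseq (pif p k) k.
Proof. by []. Qed.

Lemma psum_ge0 (R : realType) (p : seq R) a :
  (forall x, x \in p -> 0 < x) -> 0 <= \sum_(a <= i < size p) p`_i.
Proof.
move=> hp; rewrite big_seq_cond; apply: sumr_ge0 => i /andP [].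
by rewrite mem_index_iota => /andP [_ hi] _; apply/ltW/hp/mem_nth.
Qed.

Lemma jstar_lt (R : realType) (p : seq R) k :
  (0 < k)%N -> (k < size p)%N -> (forall x, x \in p -> 0 < x) -> (jstar p k < k)%N.
Proof.
move=> hk hkn hp; rewrite /jstar.
rewrite -[X in (_ < X)%N](size_iota 0 k) -has_find; apply/hasP; exists k.-1; first by rewrite mem_iota; lia.
have -> : (k - k.-1)%N = 1%N by lia.
rewrite divr1 big_ltn; last by lia.
by rewrite lerDl; apply: psum_ge0.
Qed.

Lemma cval_ge0 (R : realType) (p : seq R) k :
  (forall x, x \in p -> 0 < x) -> 0 <= cval p k.
Proof. by move=> hp; rewrite /cval divr_ge0 // psum_ge0. Qed.

Lemma heavy_ge (R : realType) (p : seq R) k :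
  (0 < k)%N -> (k < size p)%N -> sorted (fun a b : R => b <= a) p ->
  (forall x, x \in p -> 0 < x) ->
  forall l, (l < jstar p k)%N -> cval p k <= p`_l.
Proof.
move=> hk hkn hs hp l hl.
have hj := jstar_lt hk hkn hp.
move: hl; rewrite /cval; case E: (jstar p k) => [|j'] // hl.
rewrite E in hj.
have hlt : (j' < jstar p k)%N by rewrite E.
have hbf := before_find 0%N hlt.
rewrite nth_iota /= in hbf; last by lia.
have : (\sum_(j' <= i < size p) p`_i) / (k - j')%:R < p`_j'.
  by rewrite ltNge hbf.
rewrite big_ltn; last by lia.
have -> : (k - j')%N = (k - j'.+1).+1 by lia.
set S := \sum_(j'.+1 <= i < size p) p`_i.
set K := (k - j'.+1)%:R.
have hK : 0 < K by rewrite /K ltr0n; lia.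
rewrite -natr1 -/K => h.
have hpj : 0 < p`_j'.
  by apply/hp/mem_nth; exact: ltn_trans (ltnW hj) hkn.
have h2 : S / K < p`_j'.
  rewrite ltr_pdivrMr //; move: h; rewrite ltr_pdivrMr ?addr_gt0 //; nra.
apply: (le_trans (ltW h2)).
have := @sorted_leq_nth _ (fun a b : R => b <= a) _ _ 0 p hs l j'.
have hj'n : (j' < size p)%N := ltn_trans (ltnW hj) hkn.
have hlj : (l <= j')%N by rewrite -ltnS.
rewrite !inE => H; apply: H => //.
- by move=> y x z hxy hyz; apply: le_trans hyz hxy.
- exact: leq_ltn_trans hlj hj'n.
Qed.

Lemma pi_prob (R : realType) (p : seq R) k :
  (0 < k)%N -> (k < size p)%N -> (forall x, x \in p -> 0 < x) -> \sum_(x <- p) x = 1 ->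
  prob_vec (mkseq (pif p k) k).
Proof.
move=> hk hkn hp h1.
have hj := jstar_lt hk hkn hp.
apply: prob_mk.
  move=> i hi; rewrite /pif; case: ifP => hij; last exact: cval_ge0.
  by apply/ltW/hp/mem_nth; apply: ltn_trans hkn.
rewrite (big_cat_nat _ (n := jstar p k)) //=; last exact: ltnW.
rewrite (@eq_big_nat _ _ _ 0 (jstar p k) _ (fun l => p`_l)); last first.
  by move=> i /andP [_ hi]; rewrite /pif hi.
rewrite (@eq_big_nat _ _ _ (jstar p k) k _ (fun l => cval p k)); last first.
  by move=> i /andP [hi _]; rewrite /pif ltnNge hi.
rewrite sumr_const_nat /cval -(mulr_natr ((\sum_(jstar p k <= i < size p) p`_i) / (k - jstar p k)%:R)) divfK; last first.
  by rewrite pnatr_eq0 -lt0n subn_gt0.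
rewrite -big_cat_nat //; last by lia.
by rewrite -h1 [in RHS](big_nth 0).
Qed.

Lemma psum_nat_ge0 (R : realType) (f : nat -> R) a b :
  (forall i, (a <= i < b)%N -> 0 <= f i) -> 0 <= \sum_(a <= i < b) f i.
Proof.
move=> h; rewrite big_seq_cond; apply: sumr_ge0 => i /andP [].
by rewrite mem_index_iota => /h.
Qed.

Lemma psum_mono (R : realType) (f : nat -> R) N M :
  (forall i, 0 <= f i) -> (N <= M)%N -> \sum_(0 <= i < N) f i <= \sum_(0 <= i < M) f i.
Proof.
move=> h hNM; rewrite [X in _ <= X](big_cat_nat _ (n := N)) //= lerDl.
by apply: psum_nat_ge0 => i _.
Qed.

Lemma chan_le1 (R : realType) n (W : nat -> nat -> R) x N :
  is_channel n W -> (x < n)%N -> \sum_(0 <= y < N) W x y <= 1.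
Proof.
move=> [h0 h1] hx.
have hc := h1 x hx.
have hnd : {homo (fun m => \sum_(0 <= y < m) W x y) : a b / (a <= b)%N >-> a <= b}.
  by move=> a b hab; apply: psum_mono => // i; apply: h0.
have := nondecreasing_cvgn_le hnd (cvgP _ hc) N.
by rewrite (cvg_lim _ hc).
Qed.

Lemma cvg_finsum (R : realType) (r : seq nat) (f : nat -> nat -> R) (l : nat -> R) :
  (forall x, x \in r -> (f x) @ \oo --> l x) ->
  (fun N => \sum_(x <- r) f x N) @ \oo --> \sum_(x <- r) l x.
Proof.
elim: r => [|a r IH] h.
  rewrite big_nil; under eq_fun do rewrite big_nil; exact: cvg_cst.
rewrite big_cons; under eq_fun do rewrite big_cons.
apply: cvgD; first by apply: h; rewrite mem_head.
by apply: IH => x hx; apply: h; rewrite inE hx orbT.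
Qed.

Lemma prob_cat0 (R : realType) (s : seq R) m : prob_vec (s ++ nseq m 0) -> prob_vec s.
Proof.
move=> [h0 h1]; split.
  by move=> x hx; apply: h0; rewrite mem_cat hx.
have z : \sum_(x <- nseq m (0:R)) x = 0.
  by rewrite big1_seq // => x /andP [_ /nseqP [->]].
by move: h1; rewrite big_cat /= z addr0.
Qed.

Lemma main_concave (R : realType) (p : seq R) k (G : seq R -> R) (W : nat -> nat -> R) (M : R) :
  (0 < k)%N -> (k < size p)%N ->
  sorted (fun a b : R => b <= a) p ->
  (forall x, x \in p -> 0 < x) ->
  \sum_(x <- p) x = 1 ->
  F_concave G -> F_symmetric G -> F_expansible G ->
  (forall s, prob_vec s -> `|G s| <= M) ->
  is_channel (size p) W ->
  feasible (size p) k W ->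
  cvgn (series (fun y => if 0 < out_prob p W y then out_prob p W y * G (post p W y) else 0)) /\
  limn (series (fun y => if 0 < out_prob p W y then out_prob p W y * G (post p W y) else 0))
    <= G (pi_vec p k).
Proof.
move=> hk hkn hsort hp h1 hc hs he hM hch hfeas.
set n := size p.
set w := out_prob p W.
set a := fun y => if 0 < w y then w y * G (post p W y) else 0.
have hpos : forall x, (x < n)%N -> 0 < p`_x by move=> x hx; apply/hp/mem_nth.
have hW0 : forall x y, (x < n)%N -> 0 <= W x y by move=> x y hx; apply: (proj1 hch).
have hs1 : forall x N, (x < n)%N -> \sum_(0 <= y < N) W x y <= 1.
  by move=> x N hx; apply: chan_le1 hch hx.
have hw0 : forall y, 0 <= w y.
  move=> y; apply: psum_nat_ge0 => x /andP [_ hx].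
  by apply: mulr_ge0; [apply/ltW/hpos | apply: hW0].
have hWN : forall N, \sum_(0 <= y < N) w y = \sum_(0 <= x < n) p`_x * \sum_(0 <= y < N) W x y.
  move=> N; rewrite /w /out_prob exchange_big_nat /=; apply: eq_bigr => x _.
  by rewrite mulr_sumr.
have h1' : \sum_(0 <= x < n) p`_x = 1 by rewrite -h1 [in RHS](big_nth 0).
have hWN1 : forall N, \sum_(0 <= y < N) w y <= 1.
  move=> N; rewrite hWN -h1'; rewrite big_seq_cond [X in _ <= X]big_seq_cond.
  apply: ler_sum => x /andP []; rewrite mem_index_iota => /andP [_ hx] _.
  by rewrite -[X in _ <= X]mulr1; apply: ler_wpM2l; [apply/ltW/hpos | apply: hs1].
have hwz : forall y x, (x < n)%N -> w y = 0 -> W x y = 0.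
  move=> y x hx hw.
  have hle : forall i, (i < n)%N -> (fun _ => 0) i <= (fun x => p`_x * W x y) i.
    by move=> z hz; apply: mulr_ge0; [apply/ltW/hpos | apply: hW0].
  have hsum : \sum_(0 <= i < n) (fun _ => (0:R)) i = \sum_(0 <= i < n) (fun x => p`_x * W x y) i.
    by rewrite big1 //; rewrite -hw.
  move: (sum_le_eq hle hsum hx) => /= /eqP; rewrite eq_sym mulf_eq0 => /orP [/eqP e|/eqP //].
  by have := hpos x hx; rewrite e ltxx.
have hpost : forall y, 0 < w y ->
    post p W y = mkseq (fun x => p`_x * W x y / w y) n /\
    prob_vec (post p W y) /\
    (count (fun x => (0 < p`_x * W x y / w y)%R) (iota 0 n) <= k)%N.
  move=> y hy; have e : post p W y = mkseq (fun x => p`_x * W x y / w y) n by [].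
  split => //; split.
    rewrite e; apply: prob_mk.
      by move=> x hx; apply: divr_ge0; [apply: mulr_ge0; [apply/ltW/hpos|apply: hW0] | apply: hw0].
    by rewrite -mulr_suml divff //; apply: lt0r_neq0.
  apply: leq_trans (hfeas y); apply: count_le_in => x; rewrite mem_iota => /andP [_ hx] /=.
  apply: contraTT; rewrite -!leNgt => hle.
  have -> : W x y = 0 by apply/eqP; rewrite eq_le hle hW0.
  by rewrite mulr0 mul0r.
have hU : forall y, exists u : nat -> R, prob_vec (mkseq u k) /\
    (0 < w y -> G (mkseq u k) = G (post p W y) /\
       forall i, (i < k)%N -> p`_i * W i y / w y <= u i).
  move=> y; case: (ltrP 0 (w y)) => hy; last first.
    by exists (pif p k); split; [exact: pi_prob | move=> h; lra].
  have [e [hpr hcnt]] := hpost y hy.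
  have hv0 : forall x, (x < n)%N -> 0 <= p`_x * W x y / w y.
    by move=> x hx; apply: divr_ge0; [apply: mulr_ge0; [apply/ltW/hpos|apply: hW0] | apply: hw0].
  have [u [hperm hle]] := place (ltnW hkn) hv0 hcnt.
  have hpv : prob_vec (mkseq (fun x => p`_x * W x y / w y) n) by rewrite -e.
  have hperm' : perm_eq (mkseq (fun x => p`_x * W x y / w y) n) (mkseq u k ++ nseq (n - k) 0).
    by rewrite perm_sym.
  have hpc := prob_perm hpv hperm'.
  have hpu := prob_cat0 hpc.
  exists u; split => // _; split => //.
  by rewrite e (hs _ _ hpv hperm') he.
have [U hU'] := choice hU.
have hUp : forall y, prob_vec (mkseq (U y) k) := fun y => (hU' y).1.
have hUp0 : forall y i, (i < k)%N -> 0 <= U y i := fun y => (prob_mkE (hUp y)).1.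
have hpi := pi_prob hk hkn hp h1.
have hj := jstar_lt hk hkn hp.
have hM0 : 0 <= M := le_trans (normr_ge0 _) (hM _ hpi).
have hbnd : forall y, `|a y| <= M * w y.
  move=> y; rewrite /a; case: ifP => hy.
    rewrite normrM ger0_norm ?hw0 // mulrC; apply: ler_wpM2r; first exact: hw0.
    by apply: hM; have [_ [? _]] := hpost y hy.
  by rewrite normr0; apply: mulr_ge0.
have key : forall N, \sum_(0 <= y < N) a y <=
    G (pi_vec p k) + (1 - \sum_(0 <= y < N) w y) * M.
  move=> N.
  set WN := \sum_(0 <= y < N) w y.
  set d := 1 - WN.
  have hd0 : 0 <= d by rewrite /d subr_ge0; apply: hWN1.
  pose r := fun i => p`_i * (1 - \sum_(0 <= y < N) W i y).
  have hr0 : forall i, (i < n)%N -> 0 <= r i.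
    by move=> i hi; apply: mulr_ge0; [apply/ltW/hpos | rewrite subr_ge0; apply: hs1].
  have hrs : \sum_(0 <= i < n) r i = d.
    rewrite /r; under eq_bigr do rewrite mulrBr mulr1.
    by rewrite sumrB h1' /d /WN hWN.
  have hjn : (jstar p k <= n)%N by apply: ltnW; apply: ltn_trans hkn.
  have hdR : d - \sum_(0 <= i < jstar p k) r i = \sum_(jstar p k <= i < n) r i.
    by rewrite -hrs (big_cat_nat _ (n := jstar p k)) //=; ring.
  have hdR0 : 0 <= d - \sum_(0 <= i < jstar p k) r i.
    by rewrite hdR; apply: psum_nat_ge0 => i /andP [_ hi]; apply: hr0.
  have hrle : forall i, (i < n)%N -> r i <= d.
    move=> i hi; rewrite -hrs (big_cat_nat _ (n := i)) //=; last exact: ltnW.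
    rewrite [\sum_(i <= _ < n) _]big_ltn //.
    have hA : 0 <= \sum_(0 <= z < i) r z.
      by apply: psum_nat_ge0 => z /andP [_ hz]; apply: hr0; apply: ltn_trans hi.
    have hB : 0 <= \sum_(i.+1 <= z < n) r z.
      by apply: psum_nat_ge0 => z /andP [_ hz]; apply: hr0.
    lra.
  pose Rj := \sum_(0 <= i < jstar p k) r i.
  pose t := fun i => if 0 < d then
      (if (i < jstar p k)%N then r i else if i == jstar p k then d - Rj else 0) / d
    else pif p k i.
  have ht : prob_vec (mkseq t k).
    rewrite /t; case hd: (0 < d); last exact: hpi.
    apply: prob_mk.
      move=> i hi; apply: divr_ge0; last exact: ltW.
      case: ifP => hij; first by apply: hr0; apply: ltn_trans hkn.
      by case: ifP.
    rewrite -mulr_suml (big_cat_nat _ (n := jstar p k)) //=; last exact: ltnW.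
    rewrite [\sum_(jstar p k <= _ < k) _]big_ltn // ltnn eqxx.
    rewrite [\sum_((jstar p k).+1 <= _ < k) _]big1_seq; last first.
      move=> i /andP [_]; rewrite mem_index_iota => /andP [hi _].
      by rewrite ltnNge (ltnW hi) /= gtn_eqF.
    rewrite (@eq_big_nat _ _ _ 0 (jstar p k) _ r); last by move=> i /andP [_ ->].
    by rewrite -/Rj addr0 addrC subrK divff // lt0r_neq0.
  have hrt : forall i, (i < jstar p k)%N -> r i <= d * t i.
    move=> i hi; rewrite /t; case hd: (0 < d).
      by rewrite hi mulrC divfK ?lt0r_neq0.
    have d0 : d = 0 by apply/eqP; rewrite eq_le hd0 andbT leNgt hd.
    rewrite d0 mul0r; rewrite -d0; apply: hrle; apply: ltn_trans hkn; exact: ltn_trans hj.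
  pose om := fun y => if (y < N)%N then w y else d.
  pose V := fun y => if (y < N)%N then U y else t.
  have hom0 : forall y, (y < N.+1)%N -> 0 <= om y.
    by move=> y _; rewrite /om; case: ifP => _ //; apply: hw0.
  have esum : forall (X : nat -> R), \sum_(0 <= y < N.+1) om y * X y =
      \sum_(0 <= y < N) w y * X y + d * X N.
    move=> X; rewrite big_nat_recr //= {2}/om ltnn; congr (_ + _).
    by apply: eq_big_nat => y /andP [_ hy]; rewrite /om hy.
  have hom1 : \sum_(0 <= y < N.+1) om y = 1.
    have := esum (fun _ => 1); under eq_bigr do rewrite mulr1.
    move=> ->; under eq_bigr do rewrite mulr1; rewrite mulr1 -/WN /d; ring.
  have hV : forall y, (y < N.+1)%N -> prob_vec (mkseq (V y) k).
    by move=> y _; rewrite /V; case: ifP => _.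
  have [hXp hJ] := jensen hc hom0 hom1 hV.
  rewrite (esum (fun y => G (mkseq (V y) k))) /V ltnn in hJ.
  have ea : \sum_(0 <= y < N) a y =
      \sum_(0 <= y < N) w y * G (mkseq (if (y < N)%N then U y else t) k).
    apply: eq_big_nat => y /andP [_ hy]; rewrite hy /a; case: ifP => hwy.
      by rewrite (proj1 ((hU' y).2 hwy)).
    have -> : w y = 0 by apply/eqP; rewrite eq_le hw0 andbT leNgt hwy.
    by rewrite mul0r.
  have hFL : G (mkseq (fun i => \sum_(0 <= y < N.+1) om y * V y i) k) <= G (mkseq (pif p k) k).
    apply: (FL (D := fun b => (jstar p k <= b)%N)) hc hs hXp hpi _ _.
      move=> b hb hjb; rewrite -ltnNge in hjb.
      rewrite /pif hjb (esum (fun y => V y b)) /V ltnn.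
      have hbn : (b < n)%N by apply: ltn_trans hkn.
      have e1 : \sum_(0 <= y < N) w y * (if (y < N)%N then U y else t) b >=
          p`_b * \sum_(0 <= y < N) W b y.
        rewrite mulr_sumr big_seq_cond [X in _ <= X]big_seq_cond; apply: ler_sum => y.
        rewrite mem_index_iota andbT => /andP [_ hy]; rewrite hy.
        case: (ltrP 0 (w y)) => hwy.
          have := (proj2 ((hU' y).2 hwy)) b hb.
          by rewrite ler_pdivrMr // => H; rewrite [X in _ <= X]mulrC.
        have w0 : w y = 0 by apply/eqP; rewrite eq_le hw0 andbT.
        by rewrite w0 mul0r (hwz y b hbn w0) mulr0.
      have e2 := hrt b hjb.
      move: e1 e2; rewrite /r; lra.
    move=> a' b ha' hb hjb; rewrite /pif ltnNge hjb /=.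
    by case: ifP => ha'j; [apply: heavy_ge | ].
  have hGt : - M <= G (mkseq t k).
    by have := hM _ ht; rewrite ler_norml => /andP [].
  have hdG : - (d * M) <= d * G (mkseq t k) by rewrite -mulrN; apply: ler_wpM2l.
  rewrite ea pi_vecE; move: hJ hFL hdG; lra.
have hcv : cvgn (series a).
  apply: normed_cvg; apply: nondecreasing_is_cvgn.
    move=> m1 m2 hm; rewrite /series /=; apply: psum_mono => // i.
  exists M => _ [N _ <-]; rewrite /series /=.
  apply: (@le_trans _ _ (\sum_(0 <= y < N) M * w y)); first by apply: ler_sum => y _.
  by rewrite -mulr_sumr -[X in _ <= X]mulr1; apply: ler_wpM2l.
have hWc : (fun N => \sum_(0 <= y < N) w y) @ \oo --> (1:R).
  have e : (fun N => \sum_(0 <= y < N) w y) =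
      (fun N => \sum_(x <- index_iota 0 n) p`_x * \sum_(0 <= y < N) W x y).
    by apply: funext => N; rewrite hWN.
  rewrite e -h1'; apply: cvg_finsum => x; rewrite mem_index_iota => /andP [_ hx].
  rewrite -[X in _ --> X]mulr1; apply: cvgMr; exact: (proj2 hch x hx).
have hg : (fun N => G (pi_vec p k) + (1 - \sum_(0 <= y < N) w y) * M) @ \oo -->
    G (pi_vec p k) + (1 - 1) * M.
  by apply: cvgD; [exact: cvg_cst | apply: cvgMl; apply: cvgB; [exact: cvg_cst | exact: hWc]].
split => //.
have hnear : \forall N \near \oo,
    series a N <= G (pi_vec p k) + (1 - \sum_(0 <= y < N) w y) * M.
  by apply: nearW => N; apply: key.
have H : limn (series a) <= lim ((fun N => G (pi_vec p k) + (1 - \sum_(0 <= y < N) w y) * M) @ \oo).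
  by apply: ler_lim => //; exact: cvgP hg.
by rewrite (cvg_lim (@Rhausdorff R) hg) subrr mul0r addr0 in H.
Qed.

Unset Implicit Arguments.
Local Open Scope ring_scope.

Theorem lemma1 (R : realType) (p : seq R) (k : nat) (eta : R -> R)
    (F : seq R -> R) (W : nat -> nat -> R) :
  (0 < k)%N -> (k < size p)%N ->
  sorted (fun a b : R => b <= a) p ->
  (forall x, x \in p -> 0 < x) ->
  \sum_(x <- p) x = 1 ->
  gen_entropy eta F ->
  is_channel (size p) W ->
  feasible (size p) k W ->
  cond_entropy eta F p W <= eta (F (pi_vec p k)).
Proof.
move=> hk hkn hsort hp h1 [[M hM] hs he hcase] hch hfeas.
rewrite /cond_entropy.
case: hcase => [[heta hc]|[heta hc]].
  have [hcv hle] := main_concave hk hkn hsort hp h1 hc hs he hM hch hfeas.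
  exact: heta.
pose G := fun s => - F s.
have hcG : F_concave G.
  move=> s t lam hs' ht' hst hl; rewrite /G; have := hc s t lam hs' ht' hst hl; lra.
have hsG : F_symmetric G by move=> s t hs' hst; rewrite /G (hs s t hs' hst).
have heG : F_expansible G by move=> s m hs'; rewrite /G (he s m hs').
have hMG : forall s, prob_vec s -> `|G s| <= M by move=> s hs'; rewrite /G normrN; apply: hM.
have [hcv hle] := main_concave hk hkn hsort hp h1 hcG hsG heG hMG hch hfeas.
set aG := (fun y => _) in hcv hle.
have e : (fun m => \sum_(0 <= y < m)
     (if 0 < out_prob p W y then out_prob p W y * F (post p W y) else 0)) =
     (fun m => - series aG m).
  apply: funext => m; rewrite /series /= -sumrN; apply: eq_bigr => y _.
  by rewrite /aG /G; case: ifP => _; rewrite ?oppr0 // mulrN opprK.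
have hc2 : (fun m => - series aG m) @ \oo --> - limn (series aG).
  exact: cvgN hcv.
rewrite e (cvg_lim (@Rhausdorff R) hc2); apply: heta.
by move: hle; rewrite /G; lra.
Qed.
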